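(* Let $(X,\Sigma,\mu)$ be a measure space, $n,l\ge1$, $\mathbb{F}\in\{\mathbb{R},\mathbb{C}\}$, $(X_j)_{j\in[1,l]}$ a partition of $X$ into measurable subsets, $h\in L^2(X,\mu;\mathbb{F})$, and define $W:L^2(X,\mu;\mathbb{F}^n)\to\prod_{j\in[1,l]}\mathbb{F}^n$ by $W(F)=\big(\int_{X_j}h(x)f_x\,d\mu(x)\big)_{j\in[1,l]}$. Let $D\in\prod_{j\in[1,l]}\mathbb{F}^n$ be such that $W^{-1}(\{D\})$ contains a continuous frame. Then $\mathcal{F}^{\mathbb{F}}_{(X,\mu),n}\cap W^{-1}(\{D\})$ is dense in $W^{-1}(\{D\})$ (for the norm of $L^2(X,\mu;\mathbb{F}^n)$).
   Context: A family $\Phi=(\varphi_x)_{x\in X}$ in $\mathbb{F}^n$ (with measurable coordinates) is a continuous frame indexed by $(X,\mu)$ if there are $0<A\le B$ with $A\|v\|^2\le\int_X|\langle v,\varphi_x\rangle|^2d\mu(x)\le B\|v\|^2$ for all $v\in\mathbb{F}^n$. $\mathcal{F}^{\mathbb{F}}_{(X,\mu),n}$ denotes the set of such frames, viewed as a subset of $L^2(X,\mu;\mathbb{F}^n)$ (equivalently, the elements of $L^2(X,\mu;\mathbb{F}^n)$ whose coordinate functions are linearly independent in $L^2(X,\mu;\mathbb{F})$). *)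

(* Defs.v *)
From HB Require Import structures.
From mathcomp Require Import all_boot all_order all_algebra.
From mathcomp Require Import all_classical all_reals all_analysis.
From mathcomp Require Import complex.
Set Implicit Arguments. Unset Strict Implicit. Unset Printing Implicit Defensive.
Import Order.TTheory GRing.Theory Num.Theory.
Local Open Scope classical_set_scope.
Local Open Scope ring_scope.

(* Scalars of F are represented inside the complex numbers R[i].
   isC = true  : F = C (all of R[i]);
   isC = false : F = R (the elements of R[i] with zero imaginary part). *)

Section Defs.
Context {R : realType}.

Definition inF (isC : bool) (z : R[i]) : bool := isC || (complex.Im z == 0).

Definition Fvec (isC : bool) (n : nat) (v : 'I_n -> R[i]) : Prop :=
  forall i, inF isC (v i).

Definition csq (z : R[i]) : R := complex.Re z ^+ 2 + complex.Im z ^+ 2.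

Definition vsq (n : nat) (v : 'I_n -> R[i]) : R := \sum_(i < n) csq (v i).

Definition vdot (n : nat) (v w : 'I_n -> R[i]) : R[i] :=
  \sum_(i < n) v i * (w i)^*.

Context {d : measure_display} {T : measurableType d}.
Variable mu : {measure set T -> \bar R}.

Definition cmeas (g : T -> R[i]) : Prop :=
  measurable_fun setT (fun x => complex.Re (g x)) /\
  measurable_fun setT (fun x => complex.Im (g x)).

Definition L2F (isC : bool) (g : T -> R[i]) : Prop :=
  (forall x, inF isC (g x)) /\ cmeas g /\
  (\int[mu]_x (csq (g x))%:E < +oo)%E.

Definition L2Fn (isC : bool) (n : nat) (Phi : T -> 'I_n -> R[i]) : Prop :=
  forall i, L2F isC (fun x => Phi x i).

Definition is_cont_frame (isC : bool) (n : nat) (Phi : T -> 'I_n -> R[i]) : Prop :=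
  (forall i, cmeas (fun x => Phi x i)) /\
  exists A B : R, 0 < A /\ A <= B /\
    forall v : 'I_n -> R[i], Fvec isC v ->
      ((A * vsq v)%:E <= \int[mu]_x (csq (vdot v (Phi x)))%:E)%E /\
      (\int[mu]_x (csq (vdot v (Phi x)))%:E <= (B * vsq v)%:E)%E.

Definition cint (A : set T) (g : T -> R[i]) : R[i] :=
  Complex (Rintegral mu A (fun x => complex.Re (g x)))
          (Rintegral mu A (fun x => complex.Im (g x))).

Definition Wmap (l n : nat) (Xs : 'I_l -> set T) (h : T -> R[i])
  (Phi : T -> 'I_n -> R[i]) : 'I_l -> 'I_n -> R[i] :=
  fun j i => cint (Xs j) (fun x => h x * Phi x i).

Definition L2dist_sq (n : nat) (Phi Psi : T -> 'I_n -> R[i]) : \bar R :=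
  \int[mu]_x (vsq (fun i => Phi x i - Psi x i))%:E.

End Defs.

(* Main.v *)
Require Import Defs.
From HB Require Import structures.
From mathcomp Require Import all_boot all_order all_algebra.
From mathcomp Require Import all_classical all_reals all_analysis.
From mathcomp Require Import measurable_realfun.
From mathcomp Require Import complex.
From mathcomp Require Import ring lra.
Set Implicit Arguments. Unset Strict Implicit. Unset Printing Implicit Defensive.
Import Order.TTheory GRing.Theory Num.Theory.
Import numFieldNormedType.Exports.
Local Open Scope classical_set_scope.
Local Open Scope ring_scope.
Local Notation Re := complex.Re.
Local Notation Im := complex.Im.

Section LA.
Context {R : realType}.

Definition qf m (M : 'M[R]_m) (u : 'rV[R]_m) : R := (u *m M *m u^T) 0 0.
Definition nsq m (u : 'rV[R]_m) : R := \sum_i u 0 i ^+ 2.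

Lemma qf_sum m (M : 'M[R]_m) u :
  qf M u = \sum_q \sum_p (u 0 p * M p q * u 0 q).
Proof.
rewrite /qf mxE; apply: eq_bigr => q _; rewrite !mxE big_distrl /=.
by apply: eq_bigr.
Qed.

Lemma nsq_ge0 m (u : 'rV[R]_m) : 0 <= nsq u.
Proof. by apply: sumr_ge0 => i _; rewrite sqr_ge0. Qed.

Lemma nsq_eq0 m (u : 'rV[R]_m) : nsq u = 0 -> u = 0.
Proof.
move=> h; apply/matrixP => i j; rewrite mxE (ord1 i).
have := psumr_eq0P (fun j _ => sqr_ge0 (u 0 j)) h (i:=j) isT.
by move/eqP; rewrite sqrf_eq0 => /eqP.
Qed.

Lemma nsqE m (u : 'rV[R]_m) : nsq u = (u *m u^T) 0 0.
Proof. by rewrite /nsq mxE; apply: eq_bigr => i _; rewrite !mxE expr2. Qed.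

Lemma qfZ m (M : 'M[R]_m) k u : qf M (k *: u) = k ^+ 2 * qf M u.
Proof.
rewrite /qf -scalemxAl linearZ /= -scalemxAl -scalemxAr scalerA mxE.
by rewrite expr2.
Qed.

Lemma nsqZ m k (u : 'rV[R]_m) : nsq (k *: u) = k ^+ 2 * nsq u.
Proof.
rewrite /nsq mulr_sumr; apply: eq_bigr => i _; rewrite mxE.
by rewrite exprMn.
Qed.

Lemma tr11 (x : 'M[R]_1) : x^T 0 0 = x 0 0.
Proof. by rewrite mxE. Qed.

Lemma psd_zero m (M : 'M[R]_m) u : M^T = M -> (forall v, 0 <= qf M v) ->
  qf M u = 0 -> u *m M = 0.
Proof.
move=> sM psd q0; set w := u *m M.
have key : forall s, qf M (u + s *: w) = 2 * s * nsq w + s ^+ 2 * qf M w.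
  move=> s; rewrite /qf linearD /= linearZ /= !mulmxDl !mulmxDr.
  rewrite -!scalemxAr -!scalemxAl -?scalemxAr.
  have eD : forall (A B : 'M[R]_1), (A + B) 0 0 = A 0 0 + B 0 0.
    by move=> A B; rewrite mxE.
  have eZ : forall k (A : 'M[R]_1), (k *: A) 0 0 = k * A 0 0.
    by move=> k A; rewrite mxE.
  rewrite !eD !eZ.
  have e1 : (u *m M *m w^T) 0 0 = nsq w by rewrite nsqE.
  have e2 : (w *m M *m u^T) 0 0 = nsq w.
    by rewrite -tr11 !trmx_mul trmxK sM nsqE /w trmx_mul sM !mulmxA.
  rewrite /qf in q0; rewrite q0 e1 e2; ring.
set a := nsq w; set b := qf M w.
have b0 : 0 <= b by apply: psd.
have a0 : 0 <= a by apply: nsq_ge0.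
have := psd (u + (- a / (b + 1)) *: w); rewrite key -/a -/b.
set s := - a / (b + 1).
have hs : s * (b + 1) = - a.
  by rewrite /s mulrAC -mulrA divff ?mulr1 // gt_eqF // ltr_wpDl.
move=> h.
have : a = 0 by nra.
by move/nsq_eq0.
Qed.

Lemma cont_sum m (I : Type) (s : seq I) (F : I -> 'rV[R]_m -> R) :
  (forall i, continuous (F i)) ->
  continuous (fun u => \sum_(i <- s) F i u).
Proof.
move=> hF; elim: s => [|i s IH].
  under eq_fun do rewrite big_nil; move=> x; exact: (@cst_continuous _ _ 0 x).
under eq_fun do rewrite big_cons.
by move=> x; exact: (continuousD (hF i x) (IH x)).
Qed.

Lemma qf_cont m (M : 'M[R]_m) : continuous (qf M).
Proof.
have -> : qf M = fun u => \sum_q \sum_p (u 0 p * M p q * u 0 q).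
  by apply: funext => u; rewrite qf_sum.
apply: cont_sum => q; apply: cont_sum => p x.
exact: (continuousM (continuousM (@coord_continuous R 1 m 0 p x) (@cst_continuous _ _ (M p q) x)) (@coord_continuous R 1 m 0 q x)).
Qed.

Lemma nsq_cont m : continuous (@nsq m).
Proof.
apply: cont_sum => i x.
exact: (continuousM (@coord_continuous R 1 m 0 i x) (@coord_continuous R 1 m 0 i x)).
Qed.


Lemma sq_le_nsq m (u : 'rV[R]_m) i : u 0 i ^+ 2 <= nsq u.
Proof.
rewrite /nsq (bigD1 i) //= lerDl; apply: sumr_ge0 => j _; exact: sqr_ge0.
Qed.

Lemma unif m (M : 'M[R]_m) : (0 < m)%N -> M^T = M -> (forall v, 0 <= qf M v) ->
  \det M != 0 -> exists2 a, 0 < a & forall u, a * nsq u <= qf M u.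
Proof.
move=> hm sM psd dM.
pose S := [set u : 'rV[R]_m | nsq u = 1].
have cS : closed S.
  have h := (continuous_closedP (@nsq m)).1 (@nsq_cont m) _ (@closed_eq R (1:R)).
  exact: h.
have cB := @rV_compact _ m (fun _ => `[(-1 : R), 1]%classic) (fun _ => @segment_compact R (-1) 1).
have kS : compact S.
  apply: (subclosed_compact cS cB) => u /= Su i.
  have := sq_le_nsq u i; rewrite Su => h.
  have -> : (ord0 : 'I_1) = 0 by apply/val_inj.
  by rewrite in_itv /=; apply/andP; split; nra.
pose j := Ordinal hm.
have S0 : S !=set0.
  exists (delta_mx 0 j); rewrite /S /= /nsq (bigD1 j) //= big1.
    by rewrite !mxE !eqxx expr1n addr0.
  by move=> i /negbTE hij; rewrite mxE hij andbF expr0n.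
have [c Sc minc] := EVT_min_rV S0 kS (@continuous_subspaceT _ _ S _ (@qf_cont m M)).
have Sc' : nsq c = 1 by move: Sc; rewrite inE.
exists (qf M c).
  rewrite lt_neqAle psd andbT; apply/negP => /eqP/esym q0.
  have := psd_zero sM psd q0 => cM.
  move/negP: dM; apply; apply/det0P; exists c => //.
  apply/eqP => c0; move: Sc'; rewrite c0 /nsq big1 => [/esym/eqP|i _].
    by rewrite oner_eq0.
  by rewrite mxE expr0n.
move=> u.
have [u0|u0] := eqVneq (nsq u) 0.
  by rewrite u0 mulr0 psd.
have nu : 0 < nsq u by rewrite lt_neqAle eq_sym u0 nsq_ge0.
set s := Num.sqrt (nsq u).
have s0 : 0 < s by rewrite sqrtr_gt0.
have ss : s ^+ 2 = nsq u by rewrite sqr_sqrtr // nsq_ge0.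
have Sw : S (s^-1 *: u).
  by rewrite /S /= nsqZ -ss exprVn mulVf // expf_neq0 // gt_eqF.
have := minc _ (mem_set Sw); rewrite qfZ exprVn => h.
have := ler_wpM2l (ltW nu) h; rewrite -ss mulrA mulrV ?mul1r.
  by rewrite mulrC.
by rewrite unitfE expf_neq0 // gt_eqF.
Qed.

Lemma poly_nonroot (p : {poly R}) d : p != 0 -> 0 < d ->
  exists t, 0 < t < d /\ p.[t] != 0.
Proof.
move=> p0 d0.
pose rs := [seq d / (k.+2)%:R | k <- iota 0 (size p)].
have : ~~ all (root p) rs.
  apply/negP => hall; have := max_poly_roots p0 hall.
  have -> : uniq rs.
    rewrite map_inj_uniq ?iota_uniq // => a b /(mulfI (negbT (gt_eqF d0))) /invr_inj.
    by move/eqP; rewrite eqr_nat => /eqP [].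
  by rewrite size_map size_iota ltnn => /(_ isT).
case/allPn => t /mapP [k _ ->] nr; exists (d / (k.+2)%:R); split => //.
apply/andP; split; first by rewrite divr_gt0 // ltr0n.
by rewrite ltr_pdivrMr ?ltr0n // ltr_pMr // ltr1n.
Qed.


Lemma qf_upper m (M : 'M[R]_m) : exists b, 0 <= b /\ forall u, qf M u <= b * nsq u.
Proof.
exists (\sum_q \sum_p `|M p q|); split.
  by apply: sumr_ge0 => q _; apply: sumr_ge0 => p _.
move=> u; rewrite qf_sum mulr_suml; apply: ler_sum => q _.
rewrite mulr_suml; apply: ler_sum => p _.
have hp := sq_le_nsq u p; have hq := sq_le_nsq u q.
set x := u 0 p in hp *; set y := u 0 q in hq *; set N := nsq u in hp hq *.
have h1 : x * y <= N by nra.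
have h2 : - (x * y) <= N by nra.
have [k0|k0] := lerP 0 (M p q).
  by rewrite ger0_norm //; nra.
by rewrite ltr0_norm //; nra.
Qed.

Definition Mt m (A B C : 'M[R]_m) (t : R) : 'M[R]_m :=
  (1 - t) ^+ 2 *: A + (t * (1 - t)) *: B + t ^+ 2 *: C.

Lemma LAmain m (A B C : 'M[R]_m) A0 : (0 < m)%N ->
  A^T = A -> B^T = B -> C^T = C ->
  (forall t u, 0 <= qf (Mt A B C t) u) ->
  0 < A0 -> (forall u, A0 * nsq u <= qf C u) ->
  forall d, 0 < d -> exists t, (0 < t < d) /\
    exists2 a, 0 < a & forall u, a * nsq u <= qf (Mt A B C t) u.
Proof.
move=> hm sA sB sC psd A00 hC d d0.
pose P : 'M[{poly R}]_m := \matrix_(p, q) ((1 - 'X) ^+ 2 * (A p q)%:P +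
   ('X * (1 - 'X)) * (B p q)%:P + 'X ^+ 2 * (C p q)%:P).
have hP : forall t, map_mx (horner_eval t) P = Mt A B C t.
  move=> t; apply/matrixP => p q; rewrite !mxE /horner_eval.
  by rewrite !hornerE.
have hdet : forall t, (\det P).[t] = \det (Mt A B C t).
  by move=> t; rewrite -hP det_map_mx.
have dC : \det C != 0.
  apply/negP => /det0P [v v0 vC].
  have : qf C v = 0 by rewrite /qf vC mul0mx mxE.
  move=> q0; have := hC v; rewrite q0 => h.
  have : nsq v <= 0 by rewrite -(pmulr_rle0 _ A00).
  move=> h2; move/negP: v0; apply; apply/eqP/nsq_eq0.
  by apply/eqP; rewrite eq_le h2 nsq_ge0.
have M1 : Mt A B C 1 = C.
  by rewrite /Mt subrr expr0n /= !scale0r mulr0 scale0r !add0r expr1n scale1r.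
have P0 : \det P != 0.
  by apply/eqP => P0; move: dC; rewrite -M1 -hdet P0 horner0 eqxx.
have [t [td tP]] := poly_nonroot P0 d0.
exists t; split => //.
apply: unif => //.
  by rewrite /Mt !linearD /= !linearZ /= sA sB sC.
by rewrite -hdet.
Qed.

End LA.

Ltac cx := repeat match goal with z : complex _ |- _ => destruct z end; simpl.

Section Cx.
Context {R : realType}.
Implicit Types z w a b : R[i].

Lemma ReD z w : Re (z + w) = Re z + Re w. Proof. cx; ring. Qed.
Lemma ImD z w : Im (z + w) = Im z + Im w. Proof. cx; ring. Qed.
Lemma ReM z w : Re (z * w) = Re z * Re w - Im z * Im w. Proof. cx; ring. Qed.
Lemma ImM z w : Im (z * w) = Re z * Im w + Im z * Re w.
Proof. cx; ring. Qed.
Lemma ReC (r : R) : Re ((r%:C)%C) = r. Proof. by []. Qed.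
Lemma ImC (r : R) : Im ((r%:C)%C) = 0. Proof. by []. Qed.
Lemma ReJ z : Re (z^*) = Re z. Proof. by cx. Qed.
Lemma ImJ z : Im (z^*) = - Im z. Proof. by cx. Qed.
Lemma Rei : Re ('i%C : R[i]) = 0. Proof. by []. Qed.
Lemma Imi : Im ('i%C : R[i]) = 1. Proof. by []. Qed.
Lemma Re0 : Re (0 : R[i]) = 0. Proof. by []. Qed.
Lemma Im0 : Im (0 : R[i]) = 0. Proof. by []. Qed.
Lemma ReB z w : Re (z - w) = Re z - Re w. Proof. cx; ring. Qed.
Lemma ImB z w : Im (z - w) = Im z - Im w. Proof. cx; ring. Qed.

Lemma Re_sum (I : Type) (s : seq I) (F : I -> R[i]) :
  Re (\sum_(i <- s) F i) = \sum_(i <- s) Re (F i).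
Proof. elim: s => [|i s IH]; by rewrite ?big_nil ?big_cons ?ReD ?IH. Qed.
Lemma Im_sum (I : Type) (s : seq I) (F : I -> R[i]) :
  Im (\sum_(i <- s) F i) = \sum_(i <- s) Im (F i).
Proof. elim: s => [|i s IH]; by rewrite ?big_nil ?big_cons ?ImD ?IH. Qed.

Definition imul z : R[i] := Complex (- Im z) (Re z).
Lemma Reimul z : Re (imul z) = - Im z. Proof. by []. Qed.
Lemma Imimul z : Im (imul z) = Re z. Proof. by []. Qed.
Lemma csq_imul z : csq (imul z) = csq z. Proof. by rewrite /csq Reimul Imimul sqrrN addrC. Qed.
Lemma ReCx (a b : R) : Re (Complex a b) = a. Proof. by []. Qed.
Lemma ImCx (a b : R) : Im (Complex a b) = b. Proof. by []. Qed.
Lemma cxE z : z = Complex (Re z) (Im z). Proof. by cx. Qed.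
Lemma cx_eq z w : Re z = Re w -> Im z = Im w -> z = w.
Proof. by cx => -> ->. Qed.

Definition rpc z w : R := Re z * Re w + Im z * Im w.

Lemma csq_rpc z : csq z = rpc z z. Proof. by rewrite /csq /rpc !expr2. Qed.
Lemma csq_ge0 z : 0 <= csq z. Proof. by rewrite /csq addr_ge0 // sqr_ge0. Qed.
Lemma rpc_sym z w : rpc z w = rpc w z. Proof. by rewrite /rpc mulrC [Im z * _]mulrC. Qed.
Lemma rpc_bound z w : `|rpc z w| <= `|csq z + csq w|.
Proof.
rewrite (ger0_norm (addr_ge0 (csq_ge0 z) (csq_ge0 w))) /rpc /csq ler_norml.
set a := Re z; set b := Im z; set c := Re w; set e := Im w.
have h1 := sqr_ge0 (a + c); have h2 := sqr_ge0 (a - c).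
have h3 := sqr_ge0 (b + e); have h4 := sqr_ge0 (b - e).
rewrite !expr2 in h1 h2 h3 h4 *.
by apply/andP; split; nra.
Qed.
Lemma csqM z w : csq (z * w) = csq z * csq w.
Proof. by rewrite /csq ReM ImM; ring. Qed.
Lemma csqD_le z w : csq (z + w) <= 2 * csq z + 2 * csq w.
Proof.
rewrite /csq ReD ImD; set a := Re z; set b := Im z; set c := Re w; set e := Im w.
have h2 := sqr_ge0 (a - c); have h4 := sqr_ge0 (b - e).
rewrite !expr2 in h2 h4 *; nra.
Qed.
Lemma csqJ z : csq (z^*) = csq z.
Proof. by rewrite /csq ReJ ImJ sqrrN. Qed.
Lemma rpcDl z1 z2 w : rpc (z1 + z2) w = rpc z1 w + rpc z2 w.
Proof. by rewrite /rpc ReD ImD; ring. Qed.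
Lemma rpcCl (r : R) z w : rpc ((r%:C)%C * z) w = r * rpc z w.
Proof. by rewrite /rpc ReM ImM ReC ImC; ring. Qed.
Lemma rpc0l w : rpc 0 w = 0. Proof. by rewrite /rpc Re0 Im0; ring. Qed.
Lemma rpc_suml (I : Type) (s : seq I) (F : I -> R[i]) w :
  rpc (\sum_(i <- s) F i) w = \sum_(i <- s) rpc (F i) w.
Proof. elim: s => [|i s IH]; by rewrite ?big_nil ?big_cons ?rpc0l ?rpcDl ?IH. Qed.
Lemma rpc_sumr (I : Type) (s : seq I) (F : I -> R[i]) w :
  rpc w (\sum_(i <- s) F i) = \sum_(i <- s) rpc w (F i).
Proof. by rewrite rpc_sym rpc_suml; apply: eq_bigr => i _; rewrite rpc_sym. Qed.

End Cx.

Section Meas.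
Context {R : realType} {d : measure_display} {T : measurableType d}.
Variable mu : {measure set T -> \bar R}.
Implicit Types f g : T -> R[i].

Definition intR (F : T -> R) := mu.-integrable setT (EFin \o F).
Definition L2c g := cmeas g /\ intR (fun x => csq (g x)).

Lemma mfD (F G : T -> R) : measurable_fun setT F -> measurable_fun setT G ->
  measurable_fun setT (fun x => F x + G x).
Proof. exact: measurable_funD. Qed.
Lemma mfB (F G : T -> R) : measurable_fun setT F -> measurable_fun setT G ->
  measurable_fun setT (fun x => F x - G x).
Proof. exact: measurable_funB. Qed.
Lemma mfM (F G : T -> R) : measurable_fun setT F -> measurable_fun setT G ->
  measurable_fun setT (fun x => F x * G x).
Proof. exact: measurable_funM. Qed.
Lemma mfC (r : R) : measurable_fun setT (fun _ : T => r).
Proof. exact: measurable_cst. Qed.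
Lemma mfN (F : T -> R) : measurable_fun setT F -> measurable_fun setT (fun x => - F x).
Proof.
move=> mF; have -> : (fun x => - F x) = (fun x => 0 - F x).
  by apply: funext => x; rewrite sub0r.
exact: mfB (mfC 0) mF.
Qed.

Lemma cmeasD f g : cmeas f -> cmeas g -> cmeas (fun x => f x + g x).
Proof.
move=> [rf if_] [rg ig]; split.
  by under eq_fun do rewrite ReD; exact: mfD.
by under eq_fun do rewrite ImD; exact: mfD.
Qed.
Lemma cmeasM f g : cmeas f -> cmeas g -> cmeas (fun x => f x * g x).
Proof.
move=> [rf if_] [rg ig]; split.
  by under eq_fun do rewrite ReM; apply: mfB; apply: mfM.
by under eq_fun do rewrite ImM; apply: mfD; apply: mfM.
Qed.
Lemma cmeasC (a : R[i]) : cmeas (fun _ : T => a).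
Proof. by split; exact: mfC. Qed.
Lemma cmeasJ f : cmeas f -> cmeas (fun x => (f x)^*).
Proof.
move=> [rf if_]; split.
  by under eq_fun do rewrite ReJ.
by under eq_fun do rewrite ImJ; exact: mfN.
Qed.

Lemma csq_meas f : cmeas f -> measurable_fun setT (fun x => csq (f x)).
Proof. by move=> [rf if_]; rewrite /csq; apply: mfD; rewrite -?expr2;
  under eq_fun do rewrite expr2; apply: mfM. Qed.
Lemma rpc_meas f g : cmeas f -> cmeas g -> measurable_fun setT (fun x => rpc (f x) (g x)).
Proof. by move=> [rf if_] [rg ig]; rewrite /rpc; apply: mfD; apply: mfM. Qed.

Lemma intR_le (F G : T -> R) : measurable_fun setT F ->
  (forall x, `|F x| <= `|G x|) -> intR G -> intR F.
Proof.
move=> mF hle iG; apply: (le_integrable _ _ _ iG) => //.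
  exact/measurable_EFinP.
by move=> x _ /=; rewrite lee_fin.
Qed.
Lemma intRD (F G : T -> R) : intR F -> intR G -> intR (fun x => F x + G x).
Proof.
move=> iF iG.
apply: (@eq_integrable _ _ _ mu setT measurableT ((EFin \o F) \+ (EFin \o G))%E).
  by move=> x _; rewrite /= EFinD.
exact: integrableD.
Qed.
Lemma intRZ (F : T -> R) k : intR F -> intR (fun x => k * F x).
Proof.
move=> iF.
apply: (@eq_integrable _ _ _ mu setT measurableT (fun x => k%:E * (EFin \o F) x)%E).
  by move=> x _; rewrite /= EFinM.
exact: integrableZl.
Qed.
Lemma intR0 : intR (fun _ => 0).
Proof.
apply: (@eq_integrable _ _ _ mu setT measurableT (cst 0%E)) => //.
exact: integrable0.
Qed.
Lemma intR_sum (I : Type) (s : seq I) (F : I -> T -> R) :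
  (forall i, intR (F i)) -> intR (fun x => \sum_(i <- s) F i x).
Proof.
move=> hF; elim: s => [|i s IH].
  by under eq_fun do rewrite big_nil; exact: intR0.
by under eq_fun do rewrite big_cons; exact: intRD.
Qed.

Lemma L2cD f g : L2c f -> L2c g -> L2c (fun x => f x + g x).
Proof.
move=> [mf iF] [mg iG]; split; first exact: cmeasD.
apply: (@intR_le _ (fun x => 2 * csq (f x) + 2 * csq (g x))).
- by apply: csq_meas; exact: cmeasD.
- move=> x; rewrite !ger0_norm ?csqD_le ?csq_ge0 //.
  by rewrite addr_ge0 // mulr_ge0 ?csq_ge0.
- by apply: intRD; apply: intRZ.
Qed.
Lemma L2cMl (a : R[i]) f : L2c f -> L2c (fun x => a * f x).
Proof.
move=> [mf iF]; split; first by apply: cmeasM => //; exact: cmeasC.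
by under eq_fun do rewrite csqM; exact: intRZ.
Qed.
Lemma L2cJ f : L2c f -> L2c (fun x => (f x)^*).
Proof.
move=> [mf iF]; split; first exact: cmeasJ.
by under eq_fun do rewrite csqJ.
Qed.
Lemma L2c_imul f : L2c f -> L2c (fun x => imul (f x)).
Proof.
move=> [[rf if_] iF]; split; first by split => //; rewrite /imul /=; exact: mfN.
by under eq_fun do rewrite csq_imul.
Qed.
Lemma L2c0 : L2c (fun _ => 0).
Proof.
split; first exact: cmeasC.
have -> : (fun _ : T => csq (0 : R[i])) = (fun _ => 0).
  by apply: funext => x; rewrite /csq Re0 Im0 expr0n /= addr0.
exact: intR0.
Qed.
Lemma L2c_sum (I : Type) (s : seq I) (F : I -> T -> R[i]) :
  (forall i, L2c (F i)) -> L2c (fun x => \sum_(i <- s) F i x).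
Proof.
move=> hF; elim: s => [|i s IH].
  by under eq_fun do rewrite big_nil; exact: L2c0.
by under eq_fun do rewrite big_cons; exact: L2cD.
Qed.

Lemma int_rpc f g : L2c f -> L2c g -> intR (fun x => rpc (f x) (g x)).
Proof.
move=> [mf iF] [mg iG].
apply: (@intR_le _ (fun x => csq (f x) + csq (g x))).
- exact: rpc_meas.
- by move=> x; exact: rpc_bound.
- exact: intRD.
Qed.

Definition ip f g := Rintegral mu setT (fun x => rpc (f x) (g x)).

Lemma ip_sym f g : ip f g = ip g f.
Proof. by rewrite /ip; under eq_Rintegral do rewrite rpc_sym. Qed.

Lemma RintD (F G : T -> R) : intR F -> intR G ->
  Rintegral mu setT (fun x => F x + G x) = Rintegral mu setT F + Rintegral mu setT G.
Proof. by move=> iF iG; rewrite RintegralD. Qed.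
Lemma RintZ (F : T -> R) k : intR F ->
  Rintegral mu setT (fun x => k * F x) = k * Rintegral mu setT F.
Proof. by move=> iF; rewrite RintegralZl. Qed.
Lemma Rint_sum (I : Type) (s : seq I) (F : I -> T -> R) :
  (forall i, intR (F i)) ->
  Rintegral mu setT (fun x => \sum_(i <- s) F i x) = \sum_(i <- s) Rintegral mu setT (F i).
Proof.
move=> hF; elim: s => [|i s IH].
  under eq_Rintegral do rewrite big_nil.
  by rewrite big_nil Rintegral_cst // mul0r.
under eq_Rintegral do rewrite big_cons.
by rewrite RintD ?IH ?big_cons //; exact: intR_sum.
Qed.


Lemma intR_eq (F : T -> R) : intR F ->
  (\int[mu]_x (F x)%:E)%E = (Rintegral mu setT F)%:E.
Proof. by move=> iF; rewrite /Rintegral fineK // integrable_fin_num. Qed.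

Lemma ip_ext f f' g g' : f =1 f' -> g =1 g' -> ip f g = ip f' g'.
Proof. by move=> /funext -> /funext ->. Qed.

Lemma ip_linl f1 f2 g (r s : R) : L2c f1 -> L2c f2 -> L2c g ->
  ip (fun x => (r%:C)%C * f1 x + (s%:C)%C * f2 x) g = r * ip f1 g + s * ip f2 g.
Proof.
move=> h1 h2 hg; rewrite /ip.
under eq_Rintegral do rewrite rpcDl !rpcCl.
rewrite (RintD (intRZ r (int_rpc h1 hg)) (intRZ s (int_rpc h2 hg))).
by rewrite (RintZ r (int_rpc h1 hg)) (RintZ s (int_rpc h2 hg)).
Qed.

Lemma ip_linr f g1 g2 (r s : R) : L2c f -> L2c g1 -> L2c g2 ->
  ip f (fun x => (r%:C)%C * g1 x + (s%:C)%C * g2 x) = r * ip f g1 + s * ip f g2.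
Proof.
by move=> hf h1 h2; rewrite ip_sym ip_linl // (ip_sym g1) (ip_sym g2).
Qed.

Lemma ip_sums m (u : 'rV[R]_m) (G : 'I_m -> T -> R[i]) : (forall p, L2c (G p)) ->
  ip (fun x => \sum_p (u 0 p)%:C%C * G p x) (fun x => \sum_p (u 0 p)%:C%C * G p x)
  = \sum_q \sum_p (u 0 p * ip (G p) (G q) * u 0 q).
Proof.
move=> hG; rewrite /ip.
have e : forall x, rpc (\sum_p (u 0 p)%:C%C * G p x) (\sum_p (u 0 p)%:C%C * G p x)
   = \sum_q \sum_p (u 0 q * (u 0 p * rpc (G p x) (G q x))).
  move=> x; rewrite rpc_sumr; apply: eq_bigr => q _.
  rewrite rpc_suml; apply: eq_bigr => p _.
  rewrite rpcCl rpc_sym rpcCl rpc_sym; ring.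
under eq_Rintegral do rewrite e.
rewrite Rint_sum; last first.
  move=> q; apply: intR_sum => p.
  exact: (intRZ (u 0 q) (intRZ (u 0 p) (int_rpc (hG p) (hG q)))).
apply: eq_bigr => q _; rewrite Rint_sum; last first.
  move=> p; exact: (intRZ (u 0 q) (intRZ (u 0 p) (int_rpc (hG p) (hG q)))).
apply: eq_bigr => p _.
rewrite (RintZ (u 0 q) (intRZ (u 0 p) (int_rpc (hG p) (hG q)))).
rewrite (RintZ (u 0 p) (int_rpc (hG p) (hG q))).
by rewrite mulrC.
Qed.

End Meas.

Ltac cxs := apply: cx_eq; rewrite ?(ReD, ImD, ReM, ImM, ReJ, ImJ, ReC, ImC, ReB, ImB, Re0, Im0, Reimul, Imimul); rewrite ?(Rei, Imi); rewrite ?(ReCx, ImCx); ring.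


Section Realif.
Context {R : realType} (n : nat).

Definition ev (u : 'rV[R]_(n + n)) : 'I_n -> R[i] :=
  fun i => Complex (u 0 (lshift n i)) (u 0 (rshift n i)).

Definition gfv (w : 'I_n -> R[i]) (p : 'I_(n + n)) : R[i] :=
  match fintype.split p with inl i => (w i)^* | inr i => imul ((w i)^*) end.

Lemma sl (i : 'I_n) : fintype.split (lshift n i) = inl i. Proof. exact: (unsplitK (inl i)). Qed.
Lemma sr (i : 'I_n) : fintype.split (rshift n i) = inr i. Proof. exact: (unsplitK (inr i)). Qed.

Lemma cx_split (a b : R) z : Complex a b * z^* = (a%:C)%C * z^* + (b%:C)%C * imul (z^*).
Proof. cxs. Qed.

Lemma vdot_ev u w : vdot (ev u) w = \sum_p (u 0 p)%:C%C * gfv w p.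
Proof.
rewrite /vdot big_split_ord /= -big_split /=; apply: eq_bigr => i _.
by rewrite /gfv sl sr /ev cx_split.
Qed.

Lemma nsq_ev u : vsq (ev u) = nsq u.
Proof.
rewrite /vsq /nsq big_split_ord /= -big_split /=; apply: eq_bigr => i _.
by rewrite /csq /ev.
Qed.

Lemma ev_surj (v : 'I_n -> R[i]) : exists u, ev u = v.
Proof.
exists (\row_p match fintype.split p with inl i => Re (v i) | inr i => Im (v i) end).
apply: funext => i; rewrite /ev !mxE sl sr; exact: esym (cxE _).
Qed.

End Realif.

Section Main.
Context {R : realType} {d : measure_display} {T : measurableType d}.
Variable mu : {measure set T -> \bar R}.
Variable n : nat.
Implicit Types (psi phi : T -> 'I_n -> R[i]) (f g : T -> R[i]).

Definition gf psi (p : 'I_(n + n)) : T -> R[i] := fun x => gfv (psi x) p.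
Definition Gm psi phi : 'M[R]_(n + n) := \matrix_(p, q) ip mu (gf psi p) (gf phi q).
Definition L2cv psi := forall i, L2c mu (fun x => psi x i).

Lemma gf_L2c psi : L2cv psi -> forall p, L2c mu (gf psi p).
Proof.
move=> h p; rewrite /gf /gfv; case: (fintype.split p) => i.
  exact: L2cJ.
by apply: L2c_imul; exact: L2cJ.
Qed.

Lemma L2c_vdot psi v : L2cv psi -> L2c mu (fun x => vdot v (psi x)).
Proof.
move=> h; rewrite /vdot; apply: L2c_sum => i; apply: L2cMl; exact: L2cJ.
Qed.

Lemma qrepr psi : L2cv psi -> forall u,
  (\int[mu]_x (csq (vdot (ev u) (psi x)))%:E)%E = (qf (Gm psi psi) u)%:E.
Proof.
move=> h u.
have hG : L2c mu (fun x => \sum_p (u 0 p)%:C%C * gf psi p x).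
  apply: L2c_sum => p; apply: L2cMl; exact: gf_L2c.
under eq_integral => x _ do rewrite vdot_ev.
rewrite (intR_eq hG.2); congr EFin.
under eq_Rintegral do rewrite csq_rpc.
have := ip_sums u (gf_L2c h); rewrite /ip => ->; rewrite qf_sum.
by apply: eq_bigr => q _; apply: eq_bigr => p _; rewrite mxE.
Qed.

Lemma qf_Gm_ge0 psi : L2cv psi -> forall u, 0 <= qf (Gm psi psi) u.
Proof.
move=> h u; rewrite -lee_fin -qrepr //.
by apply: integral_ge0 => x _; rewrite lee_fin csq_ge0.
Qed.

Lemma Gm_tr psi phi : (Gm psi phi)^T = Gm phi psi.
Proof. by apply/matrixP => p q; rewrite !mxE ip_sym. Qed.

Definition PsiT phi phi0 (t : R) : T -> 'I_n -> R[i] :=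
  fun x i => ((1 - t)%:C)%C * phi x i + (t%:C)%C * phi0 x i.

Lemma L2cv_Psi phi phi0 t : L2cv phi -> L2cv phi0 -> L2cv (PsiT phi phi0 t).
Proof. by move=> h h0 i; apply: L2cD; apply: L2cMl. Qed.

Lemma gf_Psi phi phi0 t p x :
  gf (PsiT phi phi0 t) p x = ((1 - t)%:C)%C * gf phi p x + (t%:C)%C * gf phi0 p x.
Proof. by rewrite /gf /gfv /PsiT; case: (fintype.split p) => i; cxs. Qed.

Lemma Gm_Psi phi phi0 t : L2cv phi -> L2cv phi0 ->
  Gm (PsiT phi phi0 t) (PsiT phi phi0 t) =
  Mt (Gm phi phi) (Gm phi phi0 + Gm phi0 phi) (Gm phi0 phi0) t.
Proof.
move=> h h0; apply/matrixP => p q; rewrite !mxE.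
have L1 := gf_L2c h; have L0 := gf_L2c h0.
rewrite (@ip_ext _ _ _ mu _ (fun x => ((1 - t)%:C)%C * gf phi p x + (t%:C)%C * gf phi0 p x)
  _ (fun x => ((1 - t)%:C)%C * gf phi q x + (t%:C)%C * gf phi0 q x)); last 2 first.
- by move=> x; rewrite gf_Psi.
- by move=> x; rewrite gf_Psi.
rewrite ip_linl //; last by apply: L2cD; apply: L2cMl.
rewrite !ip_linr //.
ring.
Qed.

End Main.

Section Main2.
Context {R : realType} {d : measure_display} {T : measurableType d}.
Variable mu : {measure set T -> \bar R}.
Variable n : nat.
Implicit Types (psi phi : T -> 'I_n -> R[i]) (f g : T -> R[i]).

Lemma L2F_L2c isC g : L2F mu isC g -> L2c mu g.
Proof.
move=> [_ [mg fin]]; split => //; apply/integrableP; split.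
  by apply/measurable_EFinP; exact: csq_meas.
rewrite (eq_integral (fun x => (csq (g x))%:E)) //.
by move=> x _; rewrite /= ger0_norm // csq_ge0.
Qed.

Lemma L2c_fin g : L2c mu g -> (\int[mu]_x (csq (g x))%:E < +oo)%E.
Proof. by move=> [_ iG]; rewrite (intR_eq iG) ltry. Qed.

Lemma csq_vdot_real (v w : 'I_n -> R[i]) : (forall i, Im (w i) = 0) ->
  csq (vdot v w) = csq (vdot (fun i => (Re (v i))%:C%C) w) +
                   csq (vdot (fun i => (Im (v i))%:C%C) w).
Proof.
move=> hw; rewrite /csq /vdot !Re_sum !Im_sum.
have e1 : \sum_i Re (v i * (w i)^*) = \sum_i Re (v i) * Re (w i).
  by apply: eq_bigr => i _; rewrite ReM ReJ ImJ hw; ring.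
have e2 : \sum_i Im (v i * (w i)^*) = \sum_i Im (v i) * Re (w i).
  by apply: eq_bigr => i _; rewrite ImM ReJ ImJ hw; ring.
have e3 : \sum_i Re ((Re (v i))%:C%C * (w i)^*) = \sum_i Re (v i) * Re (w i).
  by apply: eq_bigr => i _; rewrite ReM ReJ ImJ ReC ImC; ring.
have e4 : \sum_i Im ((Re (v i))%:C%C * (w i)^*) = 0.
  by apply: big1 => i _; rewrite ImM ReJ ImJ ReC ImC hw; ring.
have e5 : \sum_i Re ((Im (v i))%:C%C * (w i)^*) = \sum_i Im (v i) * Re (w i).
  by apply: eq_bigr => i _; rewrite ReM ReJ ImJ ReC ImC; ring.
have e6 : \sum_i Im ((Im (v i))%:C%C * (w i)^*) = 0.
  by apply: big1 => i _; rewrite ImM ReJ ImJ ReC ImC hw; ring.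
by rewrite e1 e2 e3 e4 e5 e6 expr0n /= !addr0.
Qed.

Lemma vsq_split (v : 'I_n -> R[i]) :
  vsq v = vsq (fun i => (Re (v i))%:C%C) + vsq (fun i => (Im (v i))%:C%C).
Proof.
rewrite /vsq -big_split; apply: eq_bigr => i _; rewrite /csq !ReC !ImC; by rewrite /= expr0n /= !addr0.
Qed.

Lemma frame_lower isC phi0 : (forall i, L2F mu isC (fun x => phi0 x i)) ->
  is_cont_frame mu isC phi0 ->
  exists2 A0, 0 < A0 & forall u, A0 * nsq u <= qf (Gm mu phi0 phi0) u.
Proof.
move=> hL [_ [A [B [A0 [AB hAB]]]]].
have hL2 : L2cv mu phi0 := fun i => L2F_L2c (hL i).
exists A => // u.
rewrite -lee_fin -qrepr // -nsq_ev.
set v := ev u.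
case: isC hL hAB => hL hAB.
  exact: (hAB v (fun i => isT)).1.
have hw : forall x i, Im (phi0 x i) = 0.
  by move=> x i; have := (hL i).1 x; rewrite /inF /= => /eqP.
set vr := (fun i => (Re (v i))%:C%C); set vi := (fun i => (Im (v i))%:C%C).
under eq_integral => x _ do rewrite (csq_vdot_real v (hw x)) EFinD.
have mr : forall w, measurable_fun setT (fun x => (csq (vdot w (phi0 x)))%:E).
  by move=> w; apply/measurable_EFinP; apply: csq_meas; exact: (L2c_vdot w hL2).1.
rewrite ge0_integralD //; last 2 first.
- by move=> x _; rewrite lee_fin csq_ge0.
- by move=> x _; rewrite lee_fin csq_ge0.
have Fr : Fvec false vr by move=> i; rewrite /inF /vr /=.
have Fi : Fvec false vi by move=> i; rewrite /inF /vi /=.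
rewrite (vsq_split v) mulrDr EFinD; apply: leeD.
  exact: (hAB vr Fr).1.
exact: (hAB vi Fi).1.
Qed.

Lemma frame_Psi isC psi a : L2cv mu psi -> 0 < a ->
  (forall u, a * nsq u <= qf (Gm mu psi psi) u) -> is_cont_frame mu isC psi.
Proof.
move=> h a0 ha; split; first by move=> i; exact: (h i).1.
have [b [b0 hb]] := qf_upper (Gm mu psi psi).
exists a, (a + b); split => //; split; first by rewrite lerDl.
move=> v _; have [u <-] := ev_surj v.
rewrite qrepr // nsq_ev !lee_fin; split; first exact: ha.
apply: (le_trans (hb u)); rewrite mulrDl lerDr.
by rewrite mulr_ge0 ?nsq_ge0 // ltW.
Qed.

Lemma Re_hmul (z w : R[i]) : Re (z * w) = rpc z (w^*).
Proof. by rewrite /rpc ReM ReJ ImJ; ring. Qed.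
Lemma Im_hmul (z w : R[i]) : Im (z * w) = rpc z (imul (w^*)).
Proof. by rewrite /rpc ImM Reimul Imimul ReJ ImJ; ring. Qed.

Lemma intR_Re f g : L2c mu f -> L2c mu g -> intR mu (fun x => Re (f x * g x)).
Proof.
move=> hf hg; under eq_fun do rewrite Re_hmul.
by apply: int_rpc => //; exact: L2cJ.
Qed.
Lemma intR_Im f g : L2c mu f -> L2c mu g -> intR mu (fun x => Im (f x * g x)).
Proof.
move=> hf hg; under eq_fun do rewrite Im_hmul.
by apply: int_rpc => //; apply: L2c_imul; exact: L2cJ.
Qed.

Lemma intRS (A : set T) (F : T -> R) : measurable A -> intR mu F ->
  mu.-integrable A (EFin \o F).
Proof. by move=> mA iF; apply: integrableS iF. Qed.

Lemma Wmap_Psi l (Xs : 'I_l -> set T) h (D : 'I_l -> 'I_n -> R[i]) phi phi0 t :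
  (forall j, measurable (Xs j)) -> L2c mu h -> L2cv mu phi -> L2cv mu phi0 ->
  Wmap mu Xs h phi = D -> Wmap mu Xs h phi0 = D ->
  Wmap mu Xs h (PsiT phi phi0 t) = D.
Proof.
move=> mX hh h1 h0 W1 W0; apply: funext => j; apply: funext => i.
have e1 := congr1 (fun W => W j i) W1; have e0 := congr1 (fun W => W j i) W0.
rewrite /= /Wmap /cint in e1 e0 *.
have i1r := intRS (mX j) (intR_Re hh (h1 i)).
have i0r := intRS (mX j) (intR_Re hh (h0 i)).
have i1i := intRS (mX j) (intR_Im hh (h1 i)).
have i0i := intRS (mX j) (intR_Im hh (h0 i)).
apply: cx_eq; rewrite ?ReCx ?ImCx.
- have -> : (fun x => Re (h x * PsiT phi phi0 t x i)) =
     (fun x => (1 - t) * Re (h x * phi x i) + t * Re (h x * phi0 x i)).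
    by apply: funext => x; rewrite /PsiT !(ReM, ImM, ReD, ImD, ReC, ImC); ring.
  rewrite RintegralD //; last 2 first.
  + exact: (integrableS measurableT (mX j) (subsetT _) (intRZ (1 - t) (intR_Re hh (h1 i)))).
  + exact: (integrableS measurableT (mX j) (subsetT _) (intRZ t (intR_Re hh (h0 i)))).
  rewrite !RintegralZl //.
  have := congr1 (@complex.Re R) e0; rewrite ReCx => ->.
  have := congr1 (@complex.Re R) e1; rewrite ReCx => <-; ring.
- have -> : (fun x => Im (h x * PsiT phi phi0 t x i)) =
     (fun x => (1 - t) * Im (h x * phi x i) + t * Im (h x * phi0 x i)).
    by apply: funext => x; rewrite /PsiT !(ReM, ImM, ReD, ImD, ReC, ImC); ring.
  rewrite RintegralD //; last 2 first.
  + exact: (integrableS measurableT (mX j) (subsetT _) (intRZ (1 - t) (intR_Im hh (h1 i)))).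
  + exact: (integrableS measurableT (mX j) (subsetT _) (intRZ t (intR_Im hh (h0 i)))).
  rewrite !RintegralZl //.
  have := congr1 (@complex.Im R) e0; rewrite ImCx => ->.
  have := congr1 (@complex.Im R) e1; rewrite ImCx => <-; ring.
Qed.

End Main2.

Section Final.
Context {R : realType} {d : measure_display} {T : measurableType d}.
Variable mu : {measure set T -> \bar R}.
Variable n : nat.
Implicit Types (psi phi : T -> 'I_n -> R[i]) (f g : T -> R[i]).

Lemma L2cB f g : L2c mu f -> L2c mu g -> L2c mu (fun x => f x - g x).
Proof.
move=> hf hg; have := L2cD hf (L2cMl (-1) hg).
by under eq_fun do rewrite mulN1r.
Qed.

Lemma dist_Psi phi phi0 t : L2cv mu phi -> L2cv mu phi0 ->
  L2dist_sq mu phi (PsiT phi phi0 t) =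
  (t ^+ 2 * Rintegral mu setT (fun x => vsq (fun i => phi x i - phi0 x i)))%:E.
Proof.
move=> h1 h0; rewrite /L2dist_sq.
have e : forall x, vsq (fun i => phi x i - PsiT phi phi0 t x i) =
    t ^+ 2 * vsq (fun i => phi x i - phi0 x i).
  move=> x; rewrite /vsq mulr_sumr; apply: eq_bigr => i _.
  by rewrite /csq /PsiT !(ReB, ImB, ReD, ImD, ReM, ImM, ReC, ImC); ring.
under eq_integral => x _ do rewrite e.
have iV : intR mu (fun x => vsq (fun i => phi x i - phi0 x i)).
  rewrite /vsq; apply: intR_sum => i; exact: (L2cB (h1 i) (h0 i)).2.
by rewrite (intR_eq (intRZ (t ^+ 2) iV)) RintZ.
Qed.

End Final.

Theorem corollary6p3 (R : realType) (d : measure_display) (T : measurableType d)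
  (mu : {measure set T -> \bar R}) (isC : bool) (n l : nat)
  (Xs : 'I_l -> set T) (h : T -> R[i]) (D : 'I_l -> 'I_n -> R[i]) :
  (0 < n)%N -> (0 < l)%N ->
  (forall j, measurable (Xs j)) ->
  (forall j k, j != k -> Xs j `&` Xs k = set0) ->
  \bigcup_(j in [set: 'I_l]) Xs j = [set: T] ->
  L2F mu isC h ->
  (forall j, Fvec isC (D j)) ->
  (exists Phi0, L2Fn mu isC Phi0 /\ is_cont_frame mu isC Phi0 /\
                Wmap mu Xs h Phi0 = D) ->
  forall Phi, L2Fn mu isC Phi -> Wmap mu Xs h Phi = D ->
  forall eps : R, 0 < eps ->
  exists Psi, L2Fn mu isC Psi /\ is_cont_frame mu isC Psi /\
              Wmap mu Xs h Psi = D /\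
              (L2dist_sq mu Phi Psi < (eps ^+ 2)%:E)%E.
Proof.
move=> n0 _ mX _ _ hL2 _ [Phi0 [hF0 [fr0 W0]]] Phi hF W1 eps e0.
have h1 : L2cv mu Phi := fun i => L2F_L2c (hF i).
have h0 : L2cv mu Phi0 := fun i => L2F_L2c (hF0 i).
have hh := L2F_L2c hL2.
have [A0 A00 hA0] := frame_lower hF0 fr0.
set K := Rintegral mu setT (fun x => vsq (fun i => Phi x i - Phi0 x i)).
have K0 : 0 <= K.
  apply: Rintegral_ge0 => x _; apply: sumr_ge0 => i _; exact: csq_ge0.
have dl0 : 0 < eps / (K + 1) by rewrite divr_gt0 // ltr_wpDl.
have mpos : (0 < n + n)%N by rewrite addn_gt0 n0.
have [t [/andP [t0 td] [a a0 ha]]] := LAmain (A := Gm mu Phi Phi)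
   (B := Gm mu Phi Phi0 + Gm mu Phi0 Phi) (C := Gm mu Phi0 Phi0) mpos
   (Gm_tr _ _ _) ltac:(by rewrite linearD /= !Gm_tr addrC)
   (Gm_tr _ _ _)
   (fun t u => ltac:(rewrite -Gm_Psi //; exact: qf_Gm_ge0 (L2cv_Psi t h1 h0) u))
   A00 hA0 dl0.
exists (PsiT Phi Phi0 t); split; last split; last split.
- move=> i; split; last split.
  + move=> x; case: isC hF hF0 {hL2 fr0 W0 W1} => //= hF hF0.
    rewrite /inF /PsiT /=; have := (hF i).1 x; have := (hF0 i).1 x.
    rewrite /inF /= => /eqP e1 /eqP e2.
    by rewrite ImD !ImM e1 e2 !ReC !ImC; apply/eqP; ring.
  + exact: (L2cv_Psi t h1 h0 i).1.
  + exact: L2c_fin (L2cv_Psi t h1 h0 i).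
- apply: frame_Psi; [exact: (L2cv_Psi t h1 h0) | exact: a0 | ].
  by move=> u; rewrite Gm_Psi //; exact: ha.
- exact: Wmap_Psi.
- rewrite dist_Psi // -/K lte_fin.
  have htK : t * (K + 1) < eps by rewrite -ltr_pdivlMr // ltr_wpDl.
  have s0 : 0 <= t * (K + 1) by apply: mulr_ge0; [exact: ltW | exact: addr_ge0].
  have h2 : (t * (K + 1)) ^+ 2 < eps ^+ 2 by rewrite !expr2; nra.
  have h3 : t ^+ 2 * K <= (t * (K + 1)) ^+ 2.
    rewrite exprMn ler_wpM2l ?sqr_ge0 // expr2; nra.
  exact: (le_lt_trans h3 h2).
Qed.
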